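(* Let $\Phi$ be a root system of type $A_r$ with the usual numbering of simple roots, and let $j$ be an integer with $1\le j\le \frac{r+1}{2}$. Then $$v_j(\Phi)=v_{r+1-j}(\Phi)\ge j\max(1,\log r-\log j),$$ where $\log$ is the natural logarithm.
   Context: For a reduced irreducible root system $\Phi$ with simple roots $\alpha_1,\ldots,\alpha_r$, write each positive root as $\beta=\sum_{j=1}^r a_{\beta,j}\alpha_j$ with non-negative integers $a_{\beta,j}$, and set $v_j(\Phi)=\sum_{\beta\in\Phi^+}\frac{a_{\beta,j}}{\sum_{k=1}^r a_{\beta,k}}$. For type $A_r$ with usual numbering, the positive roots are $\alpha_i+\cdots+\alpha_k$, $1\le i\le k\le r$. *)

(* Defs.v *)
From HB Require Import structures.
From mathcomp Require Import all_boot all_order all_algebra.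
From mathcomp Require Import all_classical all_reals all_analysis.
Set Implicit Arguments. Unset Strict Implicit. Unset Printing Implicit Defensive.
Import Order.TTheory GRing.Theory Num.Theory.
Local Open Scope ring_scope.

(* A positive root of a rank-r root system is encoded by its coefficient
   vector with respect to the simple roots alpha_1..alpha_r:
   beta j = a_{beta,j} for 1 <= j <= r (values at other indices unused). *)

Definition root_height (r : nat) (beta : nat -> nat) : nat :=
  (\sum_(1 <= k < r.+1) beta k)%N.

Definition vj {R : realType} (r : nat) (PhiPlus : seq (nat -> nat)) (j : nat) : R :=
  \sum_(beta <- PhiPlus) ((beta j)%:R / (root_height r beta)%:R).

Definition A_root (i k : nat) : nat -> nat := fun j => nat_of_bool ((i <= j) && (j <= k))%N.

Definition posroots_A (r : nat) : seq (nat -> nat) :=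
  [seq A_root ik.1 ik.2 | ik <- [seq (i, k) | i <- iota 1 r, k <- iota i (r.+1 - i)]].

(* Main.v *)
Require Import Defs.
From HB Require Import structures.
From mathcomp Require Import all_boot all_order all_algebra.
From mathcomp Require Import all_classical all_reals all_analysis.
From mathcomp Require Import zify ring lra.
Import Order.TTheory GRing.Theory Num.Theory.
Local Open Scope ring_scope.

Lemma height_gen (i k r : nat) : (1 <= i)%N ->
  (\sum_(1 <= l < r.+1) A_root i k l)%N = ((minn k r).+1 - i)%N.
Proof.
move=> hi; elim: r => [|r IH]; first by rewrite big_geq //; lia.
rewrite big_nat_recr //= IH /A_root.
case: (leqP i r.+1) => h1; case: (leqP r.+1 k) => h2 /=; lia.
Qed.

Lemma height_A (i k r : nat) : (1 <= i)%N -> (k <= r)%N ->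
  root_height r (A_root i k) = (k.+1 - i)%N.
Proof. by move=> hi hk; rewrite /root_height height_gen //; congr (_.+1 - _)%N; lia. Qed.

Definition vfull (R : realType) (r j : nat) : R :=
  \sum_(1 <= i < r.+1) \sum_(1 <= k < r.+1) ((A_root i k j)%:R / (k.+1 - i)%:R).

Lemma vj_full (R : realType) (r j : nat) : vj (R:=R) r (posroots_A r) j = vfull R r j.
Proof.
rewrite /vj /posroots_A big_map big_allpairs_dep /vfull.
have -> : iota 1 r = index_iota 1 r.+1 by rewrite /index_iota subSS subn0.
apply: eq_big_nat => i /andP[hi1 hi2].
rewrite -[iota i (r.+1 - i)]/(index_iota i r.+1).
symmetry; rewrite (big_cat_nat _ (m:=1) (n:=i)) //=; last by lia.
rewrite big1_seq ?add0r; last first.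
  move=> k; rewrite mem_index_iota => /andP[_ hk].
  rewrite /A_root; case: (leqP i j) => h /=; last by rewrite mul0r.
  have -> : (j <= k)%N = false by apply/negbTE; lia.
  by rewrite mul0r.
apply: eq_big_nat => k /andP[hk1 hk2]; rewrite height_A //; lia.
Qed.

Lemma vfull_sym (R : realType) (r j : nat) : (1 <= j <= r)%N ->
  vfull R r (r.+1 - j) = vfull R r j.
Proof.
move=> hj; rewrite /vfull big_nat_rev /=.
under eq_bigr do rewrite big_nat_rev /=.
rewrite exchange_big /=.
apply: eq_big_nat => k hk; apply: eq_big_nat => i hi.
have E : A_root (1 + r.+1 - i.+1) (1 + r.+1 - k.+1) (r.+1 - j) = A_root k i j.
  rewrite /A_root; congr nat_of_bool.
  by apply/idP/idP => /andP[a b]; apply/andP; split; lia.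
rewrite E /A_root.
case: (leqP k j) => h1; case: (leqP j i) => h2 /=; rewrite ?mul0r //.
congr (_ / _%:R); lia.
Qed.

Definition Sres (R : realType) (r j : nat) : R :=
  \sum_(1 <= i < j.+1) \sum_(j <= k < r.+1) ((k.+1 - i)%:R)^-1.

Lemma vfull_res (R : realType) (r j : nat) : (1 <= j <= r)%N ->
  vfull R r j = Sres R r j.
Proof.
move=> hj; rewrite /vfull /Sres (big_cat_nat _ (m:=1) (n:=j.+1) (p:=r.+1)) /=; try lia.
rewrite addrC big1_seq ?add0r; last first.
  move=> i; rewrite mem_index_iota => /andP[_ /andP[hi _]].
  rewrite big1_seq // => k _; rewrite /A_root.
  have -> : (i <= j)%N = false by lia.
  by rewrite mul0r.
apply: eq_big_nat => i hi.
rewrite (big_cat_nat _ (m:=1) (n:=j) (p:=r.+1)) /=; try lia.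
rewrite big1_seq ?add0r; last first.
  move=> k; rewrite mem_index_iota => /andP[_ /andP[_ hk]]; rewrite /A_root.
  have -> : (j <= k)%N = false by lia.
  by rewrite andbF mul0r.
apply: eq_big_nat => k hk; rewrite /A_root.
have -> : ((i <= j) && (j <= k))%N = true by apply/andP; split; lia.
by rewrite mul1r.
Qed.

Lemma inv_pair (R : realFieldType) (x y : R) : 0 < x -> 0 < y ->
  4 / (x + y) <= x^-1 + y^-1.
Proof.
move=> hx hy; have hxy : 0 < x + y by rewrite addr_gt0.
rewrite ler_pdivrMr // -subr_ge0.
have -> : (x^-1 + y^-1) * (x + y) - 4 = (x - y)^+2 / (x * y).
  by field; apply/andP; split; rewrite gt_eqF.
by rewrite divr_ge0 ?sqr_ge0 // mulr_ge0 // ltW.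
Qed.

Lemma Sres_rev (R : realType) (r j : nat) : (1 <= j <= r)%N ->
  Sres R r j = \sum_(1 <= i < j.+1) \sum_(j <= k < r.+1) ((r - k + i)%:R)^-1.
Proof.
move=> hj; rewrite /Sres big_nat_rev /=.
apply: eq_big_nat => i hi; rewrite big_nat_rev /=.
apply: eq_big_nat => k hk; congr (_%:R^-1); lia.
Qed.

Lemma Sres_ge_j (R : realType) (r j : nat) : (1 <= j)%N -> (2 * j <= r + 1)%N ->
  j%:R <= Sres R r j.
Proof.
move=> h1 h2; have hj : (1 <= j <= r)%N by lia.
have E : 2 * Sres R r j = \sum_(1 <= i < j.+1) \sum_(j <= k < r.+1)
    (((k.+1 - i)%:R)^-1 + ((r - k + i)%:R)^-1).
  rewrite mulr2n mulrDl mul1r {2}Sres_rev // /Sres -big_split /=.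
  by apply: eq_bigr => i _; rewrite -big_split.
have H : 2 * Sres R r j >= \sum_(1 <= i < j.+1) \sum_(j <= k < r.+1) (4 / (r.+1)%:R : R).
  rewrite E; apply: ler_sum_nat => i hi; apply: ler_sum_nat => k hk.
  have -> : (r.+1)%:R = (k.+1 - i)%:R + (r - k + i)%:R :> R by rewrite -natrD; congr _%:R; lia.
  by apply: inv_pair; rewrite ltr0n; lia.
move: H; rewrite !sumr_const_nat subSS subn0 -[_ *+ (r.+1 - j)]mulr_natr -[_ *+ j]mulr_natr.
have Hn : (r.+1)%:R <= 2 * (r.+1 - j)%:R :> R.
  by rewrite -natrM ler_nat; lia.
have hr : 0 < (r.+1)%:R :> R by rewrite ltr0n.
have K : 2 <= 4 / (r.+1)%:R * (r.+1 - j)%:R :> R.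
  rewrite mulrAC ler_pdivlMr //.
  move: Hn; set a := (r.+1)%:R; set b := (_ - _)%:R; move=> Hn; lra.
have K2 : 2 * j%:R <= 4 / (r.+1)%:R * (r.+1 - j)%:R * j%:R :> R.
  by rewrite ler_wpM2r // ler0n.
move=> H; have := le_trans K2 H; rewrite ler_pM2l //.
Qed.

Lemma ln_step (R : realType) (m : nat) : (0 < m)%N ->
  ln (m.+1%:R : R) - ln (m%:R : R) <= (m%:R)^-1.
Proof.
move=> hm.
have hm' : 0 < (m%:R : R) by rewrite ltr0n.
rewrite -ln_div ?posrE ?ltr0n //.
have -> : (m.+1%:R : R) / m%:R = 1 + (m%:R)^-1.
  by rewrite -addn1 natrD mulrDl divff ?gt_eqF // mul1r addrC.
apply: le_ln1Dx; apply: (@lt_le_trans _ _ 0); first by rewrite ltrN10.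
by rewrite invr_ge0 ltW.
Qed.

Lemma ln_ratio (R : realType) (a b c d : nat) : (0 < a)%N -> (0 < b)%N -> (0 < c)%N -> (0 < d)%N ->
  (a * d <= c * b)%N -> ln (a%:R : R) - ln (b%:R : R) <= ln (c%:R : R) - ln (d%:R : R).
Proof.
move=> ha hb hc hd h.
rewrite -!ln_div ?posrE ?ltr0n // ler_ln ?posrE ?divr_gt0 ?ltr0n //.
rewrite ler_pdivrMr ?ltr0n // mulrAC ler_pdivlMr ?ltr0n //.
by rewrite -!natrM ler_nat.
Qed.

Lemma inner_ge (R : realType) (r j i : nat) : (1 <= i <= j)%N -> (2 * j <= r + 1)%N ->
  ln (r%:R : R) - ln (j%:R : R) <= \sum_(j <= k < r.+1) ((k.+1 - i)%:R)^-1.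
Proof.
move=> hi hr.
pose f (k : nat) : R := ln ((k.+1 - i)%:R).
have T : \sum_(j <= k < r.+1) (f k.+1 - f k) = f r.+1 - f j by apply: telescope_sumr; lia.
apply: (@le_trans _ _ (f r.+1 - f j)).
  rewrite /f; apply: ln_ratio; nia.
rewrite -T; apply: ler_sum_nat => k hk; rewrite /f.
have -> : (k.+2 - i = (k.+1 - i).+1)%N by lia.
apply: ln_step; lia.
Qed.

Lemma Sres_ge_ln (R : realType) (r j : nat) : (1 <= j)%N -> (2 * j <= r + 1)%N ->
  j%:R * (ln (r%:R : R) - ln (j%:R : R)) <= Sres R r j.
Proof.
move=> h1 h2; rewrite /Sres.
apply: (@le_trans _ _ (\sum_(1 <= i < j.+1) (ln (r%:R : R) - ln (j%:R : R)))).
  by rewrite sumr_const_nat subSS subn0 mulr_natl.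
apply: ler_sum_nat => i hi; apply: inner_ge => //; lia.
Qed.

Theorem lemma2p2 (R : realType) (r j : nat) (hj1 : (1 <= j)%N) (hj2 : (2 * j <= r + 1)%N) :
  vj (R:=R) r (posroots_A r) j = vj (R:=R) r (posroots_A r) (r.+1 - j) /\
  j%:R * Num.max 1 (ln (r%:R : R) - ln (j%:R : R)) <= vj (R:=R) r (posroots_A r) j.
Proof.
have hj : (1 <= j <= r)%N by lia.
split; first by rewrite !vj_full vfull_sym.
rewrite vj_full vfull_res // maxr_pMr ?ler0n // ge_max; apply/andP; split.
  by rewrite mulr1; apply: Sres_ge_j.
exact: Sres_ge_ln.
Qed.
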